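(* Under the standing assumptions, let $v$ be a vertex of degree $7$ in $G$. If there is a vertex $u$ of degree $3$ such that the edge $vu$ lies on a $3$-face, then there is no other vertex $w\neq u$ of degree $3$ such that the edge $vw$ lies on a $3$-face.
   Context: Standing assumptions: A total $9$-coloring of a graph is an assignment of colors from $\{1,\dots,9\}$ to the vertices and edges such that adjacent vertices, edges sharing an endpoint, and a vertex and an incident edge receive different colors. A $4$-fan is the graph on six vertices $c,u_1,\dots,u_5$ with edges $cu_j$ ($1\le j\le5$) and $u_ju_{j+1}$ ($1\le j\le4$). $G$ is a minimal counterexample: $G$ is a simple planar graph with maximum degree $8$, containing no subgraph isomorphic to a $4$-fan, that has no total $9$-coloring, and such that every simple planar graph $H$ with maximum degree at most $8$, no subgraph isomorphic to a $4$-fan, and $|V(H)|+|E(H)|<|V(G)|+|E(G)|$ has a total $9$-coloring. $G$ is considered with a fixed plane embedding; a $3$-face is a face of length $3$. *)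

(* Defs.v *)
(* Simple graphs as symmetric irreflexive relations on a
   finType; plane embeddings as planar rotation systems (combinatorial maps). *)
From mathcomp Require Import all_boot.
Set Implicit Arguments.
Unset Strict Implicit.
Unset Printing Implicit Defensive.

Section Graphs.
Variable T : finType.
Implicit Types (e : rel T) (x y z : T).

Definition simple_graph e : Prop := symmetric e /\ irreflexive e.

Definition deg e x : nat := #|[pred y | e x y]|.

Definition darts e : {set T * T} := [set p | e p.1 p.2].
Definition nedges e : nat := #|darts e| %/ 2.

Definition max_deg_le8 e : Prop := forall x, deg e x <= 8.
Definition max_deg_eq8 e : Prop := max_deg_le8 e /\ exists x, deg e x = 8.

Definition has_4fan e : Prop :=
  exists c u1 u2 u3 u4 u5 : T,
    [&& uniq [:: c; u1; u2; u3; u4; u5],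
        e c u1, e c u2, e c u3, e c u4, e c u5,
        e u1 u2, e u2 u3, e u3 u4 & e u4 u5].

Definition total9_colorable e : Prop :=
  exists (cv : T -> 'I_9) (ce : T -> T -> 'I_9),
    [/\ forall x y, e x y -> ce x y = ce y x,
        forall x y, e x y -> cv x != cv y,
        forall x y z, e x y -> e x z -> y != z -> ce x y != ce x z
      & forall x y, e x y -> ce x y != cv x].

Definition rotation_system e (rot : T -> T -> T) : Prop :=
  forall x,
    [/\ forall y, e x y -> e x (rot x y),
        {in [pred y | e x y] &, injective (rot x)}
      & forall y z, e x y -> e x z -> fconnect (rot x) y z].

Definition face_succ e (rot : T -> T -> T) (p : T * T) : T * T :=
  if e p.1 p.2 then (p.2, rot p.2 p.1) else p.

Definition nfaces e rot : nat :=
  #|[set froot (face_succ e rot) d | d in darts e]|.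

Definition ncomp e : nat := #|[set root e x | x : T]|.
Definition nisolated e : nat := #|[set x | [forall y, ~~ e x y]]|.

(* planar (genus 0) rotation system: Euler's formula V - E + F = 2 for every
   component with an edge; summed: V - E + F + #isolated = 2 #components *)
Definition planar_rotation e rot : Prop :=
  rotation_system e rot /\
  #|T| + nfaces e rot + nisolated e = 2 * ncomp e + nedges e.

Definition planar e : Prop := exists rot, planar_rotation e rot.

Definition edge_on_3face e rot x y : bool :=
  e x y && ((order (face_succ e rot) (x, y) == 3)
            || (order (face_succ e rot) (y, x) == 3)).

End Graphs.

Definition minimal_counterexample (T : finType) (e : rel T) : Prop :=
  [/\ simple_graph e, planar e, max_deg_eq8 e, ~ has_4fan e &
      ~ total9_colorable e] /\
      forall (T' : finType) (e' : rel T'),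
        simple_graph e' -> planar e' -> max_deg_le8 e' -> ~ has_4fan e' ->
        #|T'| + nedges e' < #|T| + nedges e -> total9_colorable e'.

(* Main.v *)
Require Import Defs.
From mathcomp Require Import all_boot.
Set Implicit Arguments.
Unset Strict Implicit.
Unset Printing Implicit Defensive.

Section Excise.
Variable D : finType.
Variables (g : D -> D) (c : D).
Definition excise (t : D) := if g t == c then g c else g t.

Lemma excise_iter n y : y != c -> iter n g y != c -> fconnect excise y (iter n g y).
Proof.
elim: n {-2}n (leqnn n) y => [|N IH] n.
  by rewrite leqn0 => /eqP -> y _ _; exact: connect0.
case: n => [|n] Hn y yc.
  by move=> _; exact: connect0.
rewrite iterSr.
case: (eqVneq (g y) c) => gy.
  case: n Hn => [|m] Hm.
    by rewrite /= gy eqxx.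
  rewrite gy iterSr => Hit.
  have gc : g c != c.
    apply/negP => /eqP E; move: Hit; by rewrite E iter_fix ?eqxx.
  apply: connect_trans (connect1 _) (IH m _ _ gc Hit).
    by rewrite /= /excise gy eqxx.
  by rewrite -ltnS ltnW.
move=> Hit.
apply: connect_trans (connect1 _) (IH n _ _ gy Hit).
  by rewrite /= /excise (negbTE gy).
by rewrite -ltnS.
Qed.

Lemma excise_conn y z : y != c -> z != c -> fconnect g y z -> fconnect excise y z.
Proof.
move=> yc zc /iter_findex E; rewrite -E; apply: excise_iter => //; by rewrite E.
Qed.
End Excise.

Lemma card_kernel (X Y1 Y2 : finType) (h1 : X -> Y1) (h2 : X -> Y2) (A : {set X}) :
  {in A &, forall x y, (h1 x == h1 y) = (h2 x == h2 y)} ->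
  #|h1 @: A| = #|h2 @: A|.
Proof.
move=> K.
case: (set_0Vmem A) => [->|[x0 x0A]]; first by rewrite !imset0 !cards0.
pose g r := h2 (odflt x0 [pick x in A | h1 x == r]).
have gE : {in A, forall x, g (h1 x) = h2 x}.
  move=> x xA; rewrite /g; case: pickP => [y /andP[yA /eqP E]|/(_ x)].
    by apply/eqP; rewrite /= -K // E.
  by rewrite xA eqxx.
have -> : h2 @: A = g @: (h1 @: A).
  rewrite -imset_comp; apply: eq_in_imset => x xA /=; by rewrite gE.
symmetry; apply: card_in_imset => _ _ /imsetP[x xA ->] /imsetP[y yA ->].
by rewrite !gE // => /eqP; rewrite -K // => /eqP.
Qed.

Section Count.
Variable D : finType.
Variables (f f' : D -> D) (A A' : {set D}) (p q : D).
Hypothesis injf : injective f.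
Hypothesis injf' : injective f'.
Hypothesis HA' : forall d, (d \in A') = [&& d \in A, d != p & d != q].
Hypothesis pA : p \in A.
Hypothesis qA : q \in A.
Hypothesis closA : forall d, d \in A -> f d \in A.
Hypothesis Hf' : forall d, f' d = if d \in A' then
   (if f d == p then f q else if f d == q then f p else f d) else d.
Hypothesis npq : ~~ fconnect f p q.
Hypothesis fpA' : f p \in A'.
Hypothesis fqA' : f q \in A'.

Local Notation R := (fconnect f).
Let Rsym x y : R x y = R y x. Proof. exact: fconnect_sym. Qed.
Let Rtr x y z : R x y -> R y z -> R x z. Proof. exact: connect_trans. Qed.

Definition Srel x y := R x y || ((R x p || R x q) && (R y p || R y q)).

Lemma pq_neq : p != q.
Proof. by apply: contraNneq npq => ->; exact: connect0. Qed.

Lemma S_trans x y z : Srel x y -> Srel y z -> Srel x z.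
Proof.
rewrite /Srel.
case/orP=> [Rxy|/andP[Hx Hy]]; case/orP=> [Ryz|/andP[Hy' Hz]].
- by rewrite (Rtr Rxy Ryz).
- case/orP: Hy' => H.
  + by rewrite (Rtr Rxy H) Hz orbT.
  + by rewrite (Rtr Rxy H) orbT Hz orbT.
- case/orP: Hy => H.
  + by rewrite Rsym in Ryz; rewrite (Rtr Ryz H) Hx orbT.
  + by rewrite Rsym in Ryz; rewrite (Rtr Ryz H) orbT Hx orbT.
- by rewrite Hx Hz orbT.
Qed.

Lemma S_step z : Srel z (f' z).
Proof.
rewrite Hf' /Srel; case: ifP => zA; last by rewrite connect0.
have Hq : R (f q) q by rewrite Rsym fconnect1.
have Hp : R (f p) p by rewrite Rsym fconnect1.
case: ifP => [/eqP E|_].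
  have Rz : R z p by rewrite -E fconnect1.
  by rewrite Rz Hq !orbT.
case: ifP => [/eqP E|_]; last by rewrite fconnect1.
have Rz : R z q by rewrite -E fconnect1.
by rewrite Rz Hp !orbT.
Qed.

Lemma conn'_S x y : fconnect f' x y -> Srel x y.
Proof.
move/iter_findex => <-; elim: (findex _ _ _) => [|n IH].
  by rewrite /Srel connect0.
by rewrite iterS; apply: S_trans IH (S_step _).
Qed.

Lemma iter_closed n x : x \in A -> iter n f x \in A.
Proof. by move=> xA; elim: n => //= n IH; exact: closA. Qed.

Lemma agree n x : x \in A ->
  (forall i, i <= n -> (iter i f x != p) && (iter i f x != q)) ->
  iter n f' x = iter n f x.
Proof.
elim: n x => [//|n IH] x xA H.
rewrite !iterSr.
have xA' : x \in A' by rewrite HA' xA; exact: (H 0).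
have /andP[fp fq] := H 1 isT.
have -> : f' x = f x by rewrite Hf' xA' /= (negbTE fp) (negbTE fq).
apply: IH; first exact: closA.
by move=> i le; rewrite -iterSr; apply: H.
Qed.

Lemma conn_nopq x y : x \in A -> ~~ R x p -> ~~ R x q -> R x y -> fconnect f' x y.
Proof.
move=> xA nxp nxq Rxy.
rewrite -(iter_findex Rxy) -agree //; first exact: fconnect_iter.
move=> i _; apply/andP; split.
  by apply: contraNneq nxp => <-; exact: fconnect_iter.
by apply: contraNneq nxq => <-; exact: fconnect_iter.
Qed.

Lemma conn_to a b x : (a == p) && (b == q) || (a == q) && (b == p) ->
  x \in A' -> R x a -> fconnect f' x (f b).
Proof.
move=> ab xA' Rxa.
have nab : ~~ R a b.
  by case/orP: ab => /andP[/eqP-> /eqP->] //; rewrite Rsym.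
have aA' : forall d, d \in A' -> f d == a -> f' d = f b.
  move=> d dA' /eqP fd; rewrite Hf' dA' fd.
  case/orP: ab => /andP[/eqP-> /eqP->]; first by rewrite eqxx.
  by rewrite eqxx [q == p]eq_sym (negbTE pq_neq).
have xA : x \in A by move: xA'; rewrite HA' => /and3P[].
have xa : x != a.
  by move: xA'; rewrite HA'; case/orP: ab => /andP[/eqP-> _] /and3P[].
set n := findex f x a.
have En : iter n f x = a := iter_findex Rxa.
have nlt : n < order f x := findex_max Rxa.
case En0 : n => [|m].
  by move: En; rewrite En0 /= => E; rewrite E eqxx in xa.
have H : forall i, i <= m -> (iter i f x != p) && (iter i f x != q).
  move=> i le.
  have ia : iter i f x != a.
    apply/negP => /eqP E.
    have : findex f x (iter i f x) = i by apply: findex_iter; rewrite (leq_ltn_trans le) // -ltnS -En0 ltnW.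
    by rewrite E -/n En0 => Ei; rewrite -Ei ltnn in le.
  have ib : iter i f x != b.
    apply/negP => /eqP E; move: nab; rewrite -E.
    by rewrite Rsym in Rxa; rewrite (Rtr Rxa (fconnect_iter _ _ _)).
  by case/orP: ab => /andP[/eqP ea /eqP eb]; rewrite -ea -eb ?ia ?ib // ib ia.
have dA : iter m f x \in A by exact: iter_closed.
have dA' : iter m f x \in A' by rewrite HA' dA; exact: H.
apply: connect_trans (fconnect_iter f' m x) _.
rewrite (agree xA H).
rewrite -(aA' _ dA'); first exact: fconnect1.
by rewrite -iterS -En0 En.
Qed.

Lemma hub z : z \in A' -> R z p || R z q -> fconnect f' z (f p).
Proof.
have ab1 : (p == p) && (q == q) || (p == q) && (q == p) by rewrite !eqxx.
have ab2 : (q == p) && (p == q) || (q == q) && (p == p) by rewrite !eqxx orbT.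
move=> zA' /orP[Rzp|Rzq].
  apply: connect_trans (conn_to ab1 zA' Rzp) _.
  apply: (conn_to ab2 fqA').
  by rewrite Rsym fconnect1.
exact: (conn_to ab2 zA' Rzq).
Qed.

Lemma conn_S x y : x \in A' -> y \in A' -> Srel x y -> fconnect f' x y.
Proof.
move=> xA' yA'.
have xA : x \in A by move: xA'; rewrite HA' => /and3P[].
have sym' u w : fconnect f' u w = fconnect f' w u by exact: fconnect_sym.
case/orP => [Rxy|/andP[Hx Hy]].
  case: (boolP (R x p || R x q)) => Hx.
    have Hy : R y p || R y q.
      by case/orP: Hx => H; rewrite Rsym in Rxy; rewrite (Rtr Rxy H) ?orbT.
    by apply: connect_trans (hub xA' Hx) _; rewrite sym'; exact: hub.
  by move: Hx; rewrite negb_or => /andP[nxp nxq]; exact: conn_nopq.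
by apply: connect_trans (hub xA' Hx) _; rewrite sym'; exact: hub.
Qed.

Lemma conn'E x y : x \in A' -> y \in A' -> fconnect f' x y = Srel x y.
Proof.
move=> xA' yA'; apply/idP/idP; [exact: conn'_S | exact: conn_S].
Qed.

Lemma count_faces :
  #|[set froot f d | d in A]| = #|[set froot f' d | d in A']| + 1.
Proof.
have rootE u w : (froot f u == froot f w) = R u w.
  by apply: root_connect; exact: fconnect_sym.
have rootE' u w : (froot f' u == froot f' w) = fconnect f' u w.
  by apply: root_connect; exact: fconnect_sym.
have Hp : R (f p) p by rewrite Rsym fconnect1.
have Hq : R (f q) q by rewrite Rsym fconnect1.
have sub : A' \subset A by apply/subsetP => d; rewrite HA' => /and3P[].
set B := [set d in A' | ~~ R d q].
have E1 : [set froot f d | d in A] = [set froot f d | d in A'].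
  apply/eqP; rewrite eqEsubset; apply/andP; split; last exact: imsetS.
  apply/subsetP => _ /imsetP[d dA ->].
  case: (eqVneq d p) => [->|dp].
    by apply/imsetP; exists (f p) => //; apply/rootP; [exact: fconnect_sym|rewrite Rsym].
  case: (eqVneq d q) => [->|dq].
    by apply/imsetP; exists (f q) => //; apply/rootP; [exact: fconnect_sym|rewrite Rsym].
  by apply/imsetP; exists d => //; rewrite HA' dA dp dq.
have E2 : [set froot f d | d in A'] = froot f (f q) |: [set froot f d | d in B].
  apply/eqP; rewrite eqEsubset; apply/andP; split; apply/subsetP.
    move=> _ /imsetP[d dA' ->]; rewrite !inE.
    case: (boolP (R d q)) => Rdq.
      apply/orP; left; rewrite rootE; rewrite Rsym in Hq; exact: Rtr Rdq Hq.
    by apply/orP; right; apply/imsetP; exists d; rewrite // inE dA' Rdq.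
  move=> r; rewrite !inE => /orP[/eqP ->|/imsetP[d]]; first by apply/imsetP; exists (f q).
  by rewrite inE => /andP[dA' _] ->; apply/imsetP; exists d.
have N2 : froot f (f q) \notin [set froot f d | d in B].
  apply/imsetP => -[d]; rewrite inE => /andP[_ nRdq] /eqP; rewrite rootE => Rqd.
  by move: nRdq; rewrite Rsym in Rqd; rewrite (Rtr Rqd Hq).
have E3 : [set froot f' d | d in A'] = [set froot f' d | d in B].
  apply/eqP; rewrite eqEsubset; apply/andP; split; last first.
    by apply: imsetS; apply/subsetP => d; rewrite inE => /andP[].
  apply/subsetP => _ /imsetP[d dA' ->].
  have fpB : f p \in B.
    rewrite inE fpA' /=; apply: contra npq => H; by rewrite Rsym in Hp; exact: Rtr Hp H.
  case: (boolP (R d q)) => Rdq.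
    apply/imsetP; exists (f p) => //; apply/eqP; rewrite rootE' conn'E //.
    by rewrite /Srel Rdq Hp !orbT.
  by apply/imsetP; exists d; rewrite // inE dA' Rdq.
have E4 : #|[set froot f' d | d in B]| = #|[set froot f d | d in B]|.
  apply: card_kernel => d1 d2; rewrite !inE => /andP[d1A' n1] /andP[d2A' n2].
  rewrite rootE rootE' conn'E // /Srel (negbTE n1) (negbTE n2) !orbF.
  case: (boolP (R d1 p)) => /= H1; case: (boolP (R d2 p)) => /= H2; rewrite ?orbF ?orbT //.
  by rewrite Rsym in H2; rewrite (Rtr H1 H2).
by rewrite E1 E2 cardsU1 N2 E3 E4 addnC.
Qed.
End Count.

Section Rot.
Variable T : finType.
Variables (e : rel T) (rot : T -> T -> T).
Hypothesis sg : simple_graph e.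
Hypothesis rs : rotation_system e rot.

Let esym : symmetric e := sg.1.
Let eirr : irreflexive e := sg.2.

Local Notation f := (face_succ e rot).

Lemma fsE x y : f (x, y) = if e x y then (y, rot y x) else (x, y).
Proof. by []. Qed.

Lemma rot_nb s y : e s y -> e s (rot s y).
Proof. by case: (rs s) => H _ _; exact: H. Qed.

Lemma rot_inj s y z : e s y -> e s z -> rot s y = rot s z -> y = z.
Proof. by case: (rs s) => _ H _ ey ez; exact: H. Qed.

Lemma rot_conn s y z : e s y -> e s z -> fconnect (rot s) y z.
Proof. by case: (rs s) => _ _ H; exact: H. Qed.

Lemma rot_nofix s y z : e s y -> rot s y = y -> e s z -> z = y.
Proof.
move=> ey fx ez; have := rot_conn ey ez.
by move/iter_findex => <-; rewrite iter_fix.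
Qed.

Lemma fs_inj : injective f.
Proof.
move=> [x1 y1] [x2 y2]; rewrite /face_succ /=.
case: ifP => e1; case: ifP => e2.
- case=> E1 E2; subst y2; congr pair.
  by apply: (rot_inj (s:=y1) _ _ E2); rewrite esym.
- by case=> E1 E2; move: e2; rewrite -E1 -E2 rot_nb // esym.
- by case=> E1 E2; move: e1; rewrite E1 E2 rot_nb // esym.
- by [].
Qed.

Lemma fs_dart d : d \in darts e -> f d \in darts e.
Proof.
case: d => x y; rewrite !inE /= => exy; rewrite fsE exy /=.
by apply: rot_nb; rewrite esym.
Qed.

Lemma fs_iter3 a b : e a b -> order f (a, b) == 3 ->
  iter 3 f (a, b) = (a, b).
Proof. by move=> _ /eqP <-; apply: iter_order; exact: fs_inj. Qed.

Lemma tri_common a b : e a b -> order f (a, b) == 3 ->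
  exists x, e b x /\ e a x.
Proof.
move=> eab o3; have := fs_iter3 eab o3.
have eba : e b a by rewrite esym.
have e1 : e b (rot b a) := rot_nb eba.
have e1' : e (rot b a) b by rewrite esym.
have e2 : e (rot b a) (rot (rot b a) b) := rot_nb e1'.
rewrite /= fsE eab fsE e1 fsE e2; case=> E1 _.
exists (rot b a); split => //.
by rewrite esym; move: e2; rewrite E1.
Qed.

Lemma tri_nconn a b z : e a b -> e b z -> z != a -> order f (a, b) == 3 ->
  ~~ fconnect f (a, b) (b, a).
Proof.
move=> eab ebz za o3.
have eba : e b a by rewrite esym.
have e1 : e b (rot b a) := rot_nb eba.
rewrite fconnect_orbit /orbit (eqP o3) /= !inE.
rewrite fsE eab fsE e1 !xpair_eqE.
apply/negP => /or3P[/andP[/eqP ba _]|/andP[_ /eqP ar]|/andP[/eqP br _]].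
- by move: eab; rewrite ba eirr.
- by move: za; rewrite (rot_nofix eba (Logic.eq_sym ar) ebz) eqxx.
- by move: e1; rewrite -br eirr.
Qed.
End Rot.

Section Del.
Variable T : finType.
Variables (e : rel T) (rot : T -> T -> T).
Hypothesis sg : simple_graph e.
Hypothesis rs : rotation_system e rot.
Variables (u v x0 : T).
Hypothesis evu : e v u.
Hypothesis eux : e u x0.
Hypothesis evx : e v x0.

Let esym : symmetric e := sg.1.
Let eirr : irreflexive e := sg.2.

Definition pr x y := ((x == v) && (y == u)) || ((x == u) && (y == v)).
Definition edel : rel T := [rel x y | e x y && ~~ pr x y].
Definition rotdel s t :=
  if s == v then (if rot v t == u then rot v u else rot v t)
  else if s == u then (if rot u t == v then rot u v else rot u t)
  else rot s t.

Lemma uv_neq : u != v.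
Proof. by apply: contraTneq evu => ->; rewrite eirr. Qed.
Lemma x0u : x0 != u.
Proof. by apply: contraTneq eux => ->; rewrite eirr. Qed.
Lemma x0v : x0 != v.
Proof. by apply: contraTneq evx => ->; rewrite eirr. Qed.

Lemma pr_sym x y : pr x y = pr y x.
Proof. by rewrite /pr orbC; congr orb; rewrite andbC. Qed.

Lemma pr_other x y : x != u -> x != v -> pr x y = false.
Proof. by move=> /negbTE xu /negbTE xv; rewrite /pr xu xv. Qed.

Lemma sg' : simple_graph edel.
Proof.
split; first by move=> x y; rewrite /edel /= esym pr_sym.
by move=> x; rewrite /edel /= eirr.
Qed.

Lemma rvu : rot v u != u.
Proof.
apply/negP => /eqP E; have := rot_nofix rs evu E evx.
by move/eqP; rewrite (negbTE x0u).
Qed.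

Lemma ruv : rot u v != v.
Proof.
have euv : e u v by rewrite esym.
apply/negP => /eqP E; have := rot_nofix rs euv E eux.
by move/eqP; rewrite (negbTE x0v).
Qed.

Lemma rotdel_other s : s != u -> s != v -> rotdel s =1 rot s.
Proof. by move=> /negbTE su /negbTE sv t; rewrite /rotdel su sv. Qed.

Lemma rotdel_v : rotdel v =1 excise (rot v) u.
Proof. by move=> t; rewrite /rotdel eqxx. Qed.

Lemma rotdel_u : rotdel u =1 excise (rot u) v.
Proof. by move=> t; rewrite /rotdel (negbTE uv_neq) eqxx. Qed.

Lemma edel_v y : edel v y = e v y && (y != u).
Proof. by rewrite /edel /= /pr eqxx /= [v == u]eq_sym (negbTE uv_neq) /= orbF. Qed.

Lemma edel_u y : edel u y = e u y && (y != v).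
Proof. by rewrite /edel /= /pr (negbTE uv_neq) /= eqxx. Qed.

Lemma edel_other s y : s != u -> s != v -> edel s y = e s y.
Proof. by move=> su sv; rewrite /edel /= pr_other // andbT. Qed.

Lemma rs_at s c : e s c -> rot s c != c -> rotdel s =1 excise (rot s) c ->
  (forall y, edel s y = e s y && (y != c)) ->
  [/\ forall y, edel s y -> edel s (rotdel s y),
      {in [pred y | edel s y] &, injective (rotdel s)}
    & forall y z, edel s y -> edel s z -> fconnect (rotdel s) y z].
Proof.
move=> esc rc Erot Ee; split.
- move=> y; rewrite !Ee Erot /excise => /andP[ey yc].
  case: ifP => [_|/negbT H]; last by rewrite H rot_nb.
  by rewrite rc rot_nb.
- move=> y z; rewrite !inE !Ee !Erot /excise => /andP[ey yc] /andP[ez zc].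
  case: ifP => [/eqP E1|/negbT N1]; case: ifP => [/eqP E2|/negbT N2].
  + by move=> _; apply: (rot_inj rs ey ez); rewrite E1 E2.
  + move=> E; have := rot_inj rs esc ez E => Ec.
    by move: zc; rewrite -Ec eqxx.
  + move=> E; have := rot_inj rs ey esc E => Ec.
    by move: yc; rewrite Ec eqxx.
  + exact: (rot_inj rs ey ez).
- move=> y z; rewrite !Ee => /andP[ey yc] /andP[ez zc].
  rewrite (eq_fconnect Erot); apply: excise_conn => //.
  exact: (rot_conn rs).
Qed.

Lemma rs' : rotation_system edel rotdel.
Proof.
move=> s.
case: (eqVneq s v) => [->|sv].
  exact: (rs_at evu rvu rotdel_v edel_v).
case: (eqVneq s u) => [->|su].
  have euv : e u v by rewrite esym.
  exact: (rs_at euv ruv rotdel_u edel_u).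
split.
- by move=> y; rewrite !edel_other // rotdel_other //; exact: (rot_nb rs).
- move=> y z; rewrite !inE !edel_other // !rotdel_other //; exact: (rot_inj rs).
- move=> y z; rewrite !edel_other // => ey ez.
  rewrite (eq_fconnect (rotdel_other su sv)); exact: (rot_conn rs).
Qed.
End Del.

Section Del2.
Variable T : finType.
Variables (e : rel T) (rot : T -> T -> T).
Hypothesis sg : simple_graph e.
Hypothesis rs : rotation_system e rot.
Variables (u v x0 : T).
Hypothesis evu : e v u.
Hypothesis eux : e u x0.
Hypothesis evx : e v x0.

Let esym : symmetric e := sg.1.
Let eirr : irreflexive e := sg.2.
Local Notation f := (face_succ e rot).
Local Notation e' := (edel e u v).
Local Notation rot' := (rotdel rot u v).
Local Notation f' := (face_succ e' rot').

Lemma darts_del d : (d \in darts e') = [&& d \in darts e, d != (v, u) & d != (u, v)].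
Proof.
case: d => s t; rewrite !inE /edel /= /pr !xpair_eqE negb_or.
by [].
Qed.

Lemma fdelE d : f' d = if d \in darts e' then
   (if f d == (v, u) then f (u, v) else if f d == (u, v) then f (v, u) else f d) else d.
Proof.
have uv := uv_neq sg evu.
case: d => s t; rewrite inE /=.
case: ifP => ed; last by rewrite /face_succ /= ed.
have est : e s t by move: ed; rewrite /edel /= => /andP[].
have euv : e u v by rewrite esym.
rewrite /face_succ /= ed est evu euv !xpair_eqE.
case: (eqVneq t v) => [->|tv].
  rewrite /rotdel eqxx /= [v == u]eq_sym (negbTE uv) /=.
  by case: ifP.
case: (eqVneq t u) => [->|tu].
  by rewrite /rotdel (negbTE uv) eqxx /=; case: ifP.
by rewrite /rotdel (negbTE tv) (negbTE tu).
Qed.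

Hypothesis npq : ~~ fconnect f (v, u) (u, v).

Lemma nfaces_del : nfaces e rot = nfaces e' rot' + 1.
Proof.
have uv := uv_neq sg evu.
have euv : e u v by rewrite esym.
rewrite /nfaces; apply: (count_faces (p:=(v,u)) (q:=(u,v)) (fs_inj sg rs) (fs_inj (sg' sg u v) (rs' sg rs evu eux evx))).
- exact: darts_del.
- exact: fs_dart.
- exact: fdelE.
- exact: npq.
- rewrite darts_del /face_succ /= evu !xpair_eqE (negbTE uv) eqxx /=.
  rewrite (ruv sg rs evu eux evx) andbT inE /=.
  by apply: (rot_nb rs); rewrite esym.
- rewrite darts_del /face_succ /= euv !xpair_eqE eqxx /= [v == u]eq_sym (negbTE uv) /=.
  rewrite (rvu sg rs evu eux evx) andbT inE /=.
  by rewrite andbT (rot_nb rs evu).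
Qed.

Lemma edel_sub x y : e' x y -> e x y.
Proof. by rewrite /edel /= => /andP[]. Qed.

Lemma ex0u : e' u x0.
Proof. by rewrite /edel /= eux /pr (negbTE (uv_neq sg evu)) (negbTE (x0v sg evx)) /= andbF. Qed.

Lemma ex0v : e' v x0.
Proof. by rewrite /edel /= evx /pr eqxx (negbTE (x0u sg eux)) [v == u]eq_sym (negbTE (uv_neq sg evu)). Qed.

Lemma nedges_del : nedges e = nedges e' + 1.
Proof.
rewrite /nedges.
have -> : darts e' = (darts e :\ (v, u)) :\ (u, v).
  apply/setP => d; rewrite darts_del !inE.
  by case: (e d.1 d.2); case: (d == (v, u)); case: (d == (u, v)).
have vuD : (v, u) \in darts e by rewrite inE.
have uvD : (u, v) \in darts e :\ (v, u).
  by rewrite !inE /= esym evu xpair_eqE (negbTE (uv_neq sg evu)).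
rewrite (cardsD1 (v, u) (darts e)) vuD (cardsD1 (u, v)) uvD.
rewrite add1n add1n -addn2 addnC.
by rewrite -[2 + _]/(1 * 2 + _) divnMDl // addnC.
Qed.

Lemma conn_del : connect e =2 connect e'.
Proof.
have x0u := x0u sg eux.
have x0v := x0v sg evx.
have e1 : e' x0 u.
  by rewrite edel_other // esym.
have e2 : e' x0 v.
  by rewrite edel_other // esym.
move=> x y; apply/idP/idP; last first.
  by apply: connect_sub => a b /edel_sub /connect1.
apply: connect_sub => a b eab.
case: (boolP (pr u v a b)) => H; last by apply: connect1; rewrite /edel /= eab H.
case/orP: H => /andP[/eqP -> /eqP ->].
  exact: connect_trans (connect1 ex0v) (connect1 e1).
exact: connect_trans (connect1 ex0u) (connect1 e2).
Qed.

Lemma ncomp_del : ncomp e = ncomp e'.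
Proof.
have E : root e =1 root e' by move=> x; rewrite /root (eq_pick (conn_del x)).
by rewrite /ncomp (eq_imset _ E).
Qed.

Lemma nisol_del : nisolated e = nisolated e'.
Proof.
rewrite /nisolated; apply: eq_card => x; rewrite !inE.
case: (eqVneq x u) => [->|xu].
  apply/idP/idP => /forallP /(_ x0); first by rewrite eux.
  by rewrite ex0u.
case: (eqVneq x v) => [->|xv].
  apply/idP/idP => /forallP /(_ x0); first by rewrite evx.
  by rewrite ex0v.
by apply: eq_forallb => y; rewrite edel_other.
Qed.

Lemma deg_del x : deg e' x <= deg e x.
Proof. by apply: subset_leq_card; apply/subsetP => y; rewrite !inE => /edel_sub. Qed.

Lemma fan_del : has_4fan e' -> has_4fan e.
Proof.
move=> [c [u1 [u2 [u3 [u4 [u5 H]]]]]].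
exists c, u1, u2, u3, u4, u5.
case/and5P: H => H1 /edel_sub H2 /edel_sub H3 /edel_sub H4.
case/and5P => /edel_sub H5 /edel_sub H6 /edel_sub H7 /edel_sub H8.
case/andP => /edel_sub H9 /edel_sub H10.
by apply/and5P; split => //; apply/and5P; split => //; apply/andP.
Qed.
End Del2.

Definition compat (a b : option 'I_9) : bool :=
  if a is Some x then (if b is Some y then x != y else true) else true.

Lemma compat_sym a b : compat a b = compat b a.
Proof. by case: a => [x|]; case: b => [y|] //=; rewrite eq_sym. Qed.

Lemma compatSS x y : compat (Some x) (Some y) = (x != y).
Proof. by []. Qed.

Lemma cardsU_le (T : finType) (A B : {set T}) : #|A :|: B| <= #|A| + #|B|.
Proof. by rewrite cardsU leq_subr. Qed.

Lemma ex_notin (F : {set 'I_9}) : #|F| <= 8 -> exists c, c \notin F.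
Proof.
move=> H; have := cardsC F; rewrite card_ord => E.
have : 0 < #|~: F|.
  by rewrite lt0n; apply/eqP => E0; rewrite E0 addn0 in E; rewrite E in H.
by case/card_gt0P => c; rewrite inE => cF; exists c.
Qed.

Section PC.
Variable T : finType.
Variable e : rel T.
Hypothesis sg : simple_graph e.
Let esym : symmetric e := sg.1.
Let eirr : irreflexive e := sg.2.

Definition PV (cv : T -> option 'I_9) (ce : T -> T -> option 'I_9) : Prop :=
 [/\ forall x y, e x y -> ce x y = ce y x,
     forall x y, e x y -> compat (cv x) (cv y),
     forall x y z, e x y -> e x z -> y != z -> compat (ce x y) (ce x z)
   & forall x y, e x y -> compat (ce x y) (cv x)].

Definition setE (s t : T) (o : option 'I_9) (ce : T -> T -> option 'I_9) :=
  fun x y => if ((x == s) && (y == t)) || ((x == t) && (y == s)) then o else ce x y.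
Definition setV (s : T) (o : option 'I_9) (cv : T -> option 'I_9) :=
  fun x => if x == s then o else cv x.


Lemma condE_sym (s t x y : T) :
  ((x == s) && (y == t)) || ((x == t) && (y == s)) =
  ((y == s) && (x == t)) || ((y == t) && (x == s)).
Proof. by rewrite orbC andbC; congr orb; rewrite andbC. Qed.

Lemma setE_a s t o ce a b : a != s -> a != t -> setE s t o ce a b = ce a b.
Proof. by move=> /negbTE H1 /negbTE H2; rewrite /setE H1 H2. Qed.
Lemma setE_b s t o ce a b : b != s -> b != t -> setE s t o ce a b = ce a b.
Proof. by move=> /negbTE H1 /negbTE H2; rewrite /setE H1 H2 !andbF. Qed.
Lemma setE_st s t o ce : setE s t o ce s t = o.
Proof. by rewrite /setE !eqxx. Qed.
Lemma setE_ts s t o ce : setE s t o ce t s = o.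
Proof. by rewrite /setE !eqxx orbT. Qed.
Lemma setV_s s o cv : setV s o cv s = o.
Proof. by rewrite /setV eqxx. Qed.
Lemma setV_o s o cv a : a != s -> setV s o cv a = cv a.
Proof. by move=> /negbTE H; rewrite /setV H. Qed.

Lemma nbr3 s a b : deg e s = 3 -> e s a -> e s b -> a != b ->
  exists c, [/\ e s c, c != a, c != b &
     forall y, e s y -> [|| y == a, y == b | y == c]].
Proof.
move=> d3 ea eb ab.
have : #|([set y | e s y] :\ a) :\ b| == 1.
  have E1 := cardsD1 a [set y | e s y].
  have E2 := cardsD1 b ([set y | e s y] :\ a).
  have ina : a \in [set y | e s y] by rewrite inE.
  have inb : b \in [set y | e s y] :\ a by rewrite !inE eb eq_sym ab.
  have c3 : #|[set y | e s y]| = 3 by rewrite -d3; apply: eq_card => y; rewrite inE.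
  rewrite ina c3 in E1; rewrite inb in E2.
  move: E1 E2 => /= E1 E2; apply/eqP.
  by move: E1; rewrite E2 !add1n => -[] ->.
case/cards1P => c Ec.
have : c \in [set c] by rewrite inE.
rewrite -Ec !inE => /and3P[cb ca ec].
exists c; split => // y ey.
case: (eqVneq y a) => //= ya; case: (eqVneq y b) => //= yb.
have : y \in [set c] by rewrite -Ec !inE ya yb ey.
by rewrite inE => ->.
Qed.

Lemma PV_setV_None cv ce s : PV cv ce -> PV (setV s None cv) ce.
Proof.
case=> H1 H2 H3 H4; split => //.
- move=> x y exy; rewrite /setV; case: ifP => _ //; case: ifP => _.
    by case: (cv x).
  exact: H2.
- move=> x y exy; rewrite /setV; case: ifP => _; first by case: (ce x y).
  exact: H4.
Qed.

Lemma PV_setE_None cv ce s t : PV cv ce -> PV cv (setE s t None ce).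
Proof.
case=> H1 H2 H3 H4; split => //.
- move=> x y exy; rewrite /setE condE_sym; case: ifP => //; by rewrite H1.
- move=> x y z exy exz yz; rewrite /setE; case: ifP => // _; case: ifP => _.
    by case: (ce x y).
  exact: H3.
- move=> x y exy; rewrite /setE; case: ifP => // _; exact: H4.
Qed.

Lemma PV_setV cv ce s c : PV cv ce ->
  (forall y, e s y -> compat (Some c) (cv y)) ->
  (forall y, e s y -> compat (ce s y) (Some c)) ->
  PV (setV s (Some c) cv) ce.
Proof.
case=> H1 H2 H3 H4 Hv He; split => //.
- move=> x y exy; rewrite /setV.
  case: (eqVneq x s) => [xs|xs]; case: (eqVneq y s) => [ys|ys].
  + by move: exy; rewrite xs ys eirr.
  + by subst x; exact: Hv.
  + by subst y; rewrite compat_sym; apply: Hv; rewrite esym.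
  + exact: H2.
- move=> x y exy; rewrite /setV; case: (eqVneq x s) => [xs|xs].
    by subst x; exact: He.
  exact: H4.
Qed.

Lemma PV_setE cv ce s t c : PV cv ce -> e s t ->
  compat (Some c) (cv s) -> compat (Some c) (cv t) ->
  (forall y, e s y -> y != t -> compat (ce s y) (Some c)) ->
  (forall y, e t y -> y != s -> compat (ce t y) (Some c)) ->
  PV cv (setE s t (Some c) ce).
Proof.
case=> H1 H2 H3 H4 est Hs Ht Es Et.
have st : s != t by apply: contraTneq est => ->; rewrite eirr.
split => //.
- move=> x y exy; rewrite /setE condE_sym; case: ifP => //; by rewrite H1.
- move=> x y z exy exz yz; rewrite /setE.
  case: (boolP (((x == s) && (y == t)) || ((x == t) && (y == s)))) => Ky;
  case: (boolP (((x == s) && (z == t)) || ((x == t) && (z == s)))) => Kz.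
  + exfalso.
    case/orP: Ky => /andP[/eqP xs /eqP yt]; case/orP: Kz => /andP[/eqP xs' /eqP zt].
    * by move: yz; rewrite yt zt eqxx.
    * by move: st; rewrite -xs xs' eqxx.
    * by move: st; rewrite -xs xs' eqxx.
    * by move: yz; rewrite yt zt eqxx.
  + rewrite compat_sym.
    case/orP: Ky => /andP[/eqP xs /eqP yt]; subst x y.
    * apply: Es => //; by rewrite eq_sym.
    * apply: Et => //; by rewrite eq_sym.
  + case/orP: Kz => /andP[/eqP xs /eqP zt]; subst x z.
    * exact: Es.
    * exact: Et.
  + exact: H3.
- move=> x y exy; rewrite /setE; case: ifP => [/orP[]/andP[/eqP-> _]//|_].
  exact: H4.
Qed.

Lemma ex_vcol cv ce s : PV cv ce -> deg e s <= 4 ->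
  exists c, (forall y, e s y -> compat (Some c) (cv y)) /\
            (forall y, e s y -> compat (ce s y) (Some c)).
Proof.
move=> _ dg.
set N := [set y | e s y].
set F := [set odflt ord0 (cv y) | y in N] :|: [set odflt ord0 (ce s y) | y in N].
have cN : #|N| = deg e s by apply: eq_card => y; rewrite inE.
have cF : #|F| <= 8.
  apply: leq_trans (cardsU_le _ _) _.
  apply: leq_trans (leq_add (leq_imset_card _ _) (leq_imset_card _ _)) _.
  by rewrite cN; rewrite -[8]/(4 + 4) leq_add.
case: (ex_notin cF) => c cF'.
exists c; split => y ey.
- case Ey : (cv y) => [d|] //=; apply: contraNneq cF' => ->.
  by rewrite inE; apply/orP; left; apply/imsetP; exists y; rewrite ?inE ?Ey.
- case Ey : (ce s y) => [d|] //=; apply: contraNneq cF' => <-.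
  by rewrite inE; apply/orP; right; apply/imsetP; exists y; rewrite ?inE ?Ey.
Qed.

Lemma ex_ecol cv ce s t : deg e s + deg e t <= 6 ->
  exists c, [/\ compat (Some c) (cv s), compat (Some c) (cv t),
            (forall y, e s y -> compat (ce s y) (Some c)) &
            (forall y, e t y -> compat (ce t y) (Some c))].
Proof.
move=> dg.
set Ns := [set y | e s y].
set Nt := [set y | e t y].
set F := (odflt ord0 (cv s) |: [set odflt ord0 (cv t)]) :|:
   ([set odflt ord0 (ce s y) | y in Ns] :|: [set odflt ord0 (ce t y) | y in Nt]).
have cNs : #|Ns| = deg e s by apply: eq_card => y; rewrite inE.
have cNt : #|Nt| = deg e t by apply: eq_card => y; rewrite inE.
have c1 : #|odflt ord0 (cv s) |: [set odflt ord0 (cv t)]| <= 2.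
  by apply: leq_trans (cardsU_le _ _) _; rewrite !cards1.
have c2 : #|[set odflt ord0 (ce s y) | y in Ns]| <= deg e s.
  by rewrite -cNs leq_imset_card.
have c3 : #|[set odflt ord0 (ce t y) | y in Nt]| <= deg e t.
  by rewrite -cNt leq_imset_card.
have cF : #|F| <= 8.
  apply: leq_trans (cardsU_le _ _) _.
  apply: leq_trans (leq_add c1 (cardsU_le _ _)) _.
  apply: leq_trans (leq_add (leqnn 2) (leq_add c2 c3)) _.
  by rewrite -[8]/(2 + 6) leq_add.
case: (ex_notin cF) => c cF'.
exists c; split.
- case Ey : (cv s) => [d|] //=; apply: contraNneq cF' => ->.
  by rewrite !inE Ey eqxx.
- case Ey : (cv t) => [d|] //=; apply: contraNneq cF' => ->.
  by rewrite !inE Ey eqxx orbT.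
- move=> y ey; case Ey : (ce s y) => [d|] //=; apply: contraNneq cF' => <-.
  rewrite !inE; apply/orP; right; apply/orP; left.
  by apply/imsetP; exists y; rewrite ?inE ?Ey.
- move=> y ey; case Ey : (ce t y) => [d|] //=; apply: contraNneq cF' => <-.
  rewrite !inE; apply/orP; right; apply/orP; right.
  by apply/imsetP; exists y; rewrite ?inE ?Ey.
Qed.

Lemma PV_total cv ce : PV cv ce -> (forall x, cv x != None) ->
  (forall x y, e x y -> ce x y != None) -> total9_colorable e.
Proof.
case=> H1 H2 H3 H4 Fv Fe.
exists (fun x => odflt ord0 (cv x)), (fun x y => odflt ord0 (ce x y)); split.
- by move=> x y exy; rewrite H1.
- move=> x y exy; have := H2 _ _ exy.
  by case: (cv x) (Fv x) => // a _; case: (cv y) (Fv y).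
- move=> x y z exy exz yz; have := H3 _ _ _ exy exz yz.
  by case: (ce x y) (Fe _ _ exy) => // a _; case: (ce x z) (Fe _ _ exz).
- move=> x y exy; have := H4 _ _ exy.
  by case: (ce x y) (Fe _ _ exy) => // a _; case: (cv x) (Fv x).
Qed.
End PC.

Section Recolor.
Variable T : finType.
Variable e : rel T.
Hypothesis sg : simple_graph e.
Let esym : symmetric e := sg.1.
Let eirr : irreflexive e := sg.2.
Variables (u v w x z : T).
Hypothesis evu : e v u.
Hypothesis evw : e v w.
Hypothesis wu : w != u.
Hypothesis du : deg e u = 3.
Hypothesis dw : deg e w = 3.
Hypothesis dv : deg e v = 7.
Hypothesis eux : e u x.
Hypothesis evx : e v x.
Hypothesis xw : e u w -> x = w.
Hypothesis euz : e u z.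
Hypothesis zv : z != v.
Hypothesis zx : z != x.
Hypothesis Nu : forall y, e u y -> [|| y == v, y == x | y == z].
Variables (cv0 : T -> 'I_9) (ce0 : T -> T -> 'I_9).
Local Notation ep := (edel e u v).
Hypothesis C1 : forall a b, ep a b -> ce0 a b = ce0 b a.
Hypothesis C2 : forall a b, ep a b -> cv0 a != cv0 b.
Hypothesis C3 : forall a b c, ep a b -> ep a c -> b != c -> ce0 a b != ce0 a c.
Hypothesis C4 : forall a b, ep a b -> ce0 a b != cv0 a.

Lemma neq_e a b : e a b -> a != b.
Proof. by apply: contraTneq => ->; rewrite eirr. Qed.

Let uv : u != v. Proof. by rewrite eq_sym; apply: neq_e. Qed.
Let vu : v != u. Proof. exact: neq_e. Qed.
Let xu : x != u. Proof. by rewrite eq_sym; apply: neq_e. Qed.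
Let xv : x != v. Proof. by rewrite eq_sym; apply: neq_e. Qed.
Let zu : z != u. Proof. by rewrite eq_sym; apply: neq_e. Qed.
Let wv : w != v. Proof. by rewrite eq_sym; apply: neq_e. Qed.
Let vw : v != w. Proof. exact: neq_e. Qed.
Let uw : u != w. Proof. by rewrite eq_sym. Qed.
Let ux : u != x. Proof. by rewrite eq_sym. Qed.
Let vx : v != x. Proof. by rewrite eq_sym. Qed.

Lemma ep_of a b : e a b -> ~~ pr u v a b -> ep a b.
Proof. by move=> eab H; rewrite /edel /= eab H. Qed.

Lemma epv y : e v y -> y != u -> ep v y.
Proof. by move=> ey yu; apply: ep_of => //; rewrite /pr eqxx (negbTE yu) (negbTE vu). Qed.

Lemma epu y : e u y -> y != v -> ep u y.
Proof. by move=> ey yv; apply: ep_of => //; rewrite /pr eqxx (negbTE yv) (negbTE uv). Qed.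

Lemma epo a y : e a y -> a != u -> a != v -> ep a y.
Proof. by move=> ey au av; apply: ep_of => //; rewrite /pr (negbTE au) (negbTE av). Qed.

Definition cvI := setV w None (setV u None (fun a => Some (cv0 a))).
Definition ceI := setE v u None (fun a b => Some (ce0 a b)).

Lemma ceIE a b : ceI a b = if pr u v a b then None else Some (ce0 a b).
Proof. by []. Qed.

Lemma cvI_o a : a != u -> a != w -> cvI a = Some (cv0 a).
Proof. by move=> au aw; rewrite /cvI !setV_o. Qed.

Lemma cvI_u : cvI u = None.
Proof. by rewrite /cvI setV_o // setV_s. Qed.

Lemma cvI_w : cvI w = None.
Proof. by rewrite /cvI setV_s. Qed.

Lemma ceI_v y : y != u -> ceI v y = Some (ce0 v y).
Proof. by move=> yu; rewrite ceIE /pr eqxx (negbTE yu) (negbTE vu). Qed.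

Lemma ceI_u y : y != v -> ceI u y = Some (ce0 u y).
Proof. by move=> yv; rewrite ceIE /pr eqxx (negbTE yv) (negbTE uv). Qed.

Lemma ceI_o a b : a != u -> a != v -> ceI a b = Some (ce0 a b).
Proof. by move=> au av; rewrite ceIE /pr (negbTE au) (negbTE av). Qed.

Lemma pr_u a b : pr u v a b -> (a == u) || (b == u).
Proof. by case/orP => /andP[] => [_ ->|-> _]; rewrite ?orbT. Qed.

Lemma PV_I : PV e cvI ceI.
Proof.
apply: PV_setV_None; split.
- move=> a b eab; rewrite !ceIE pr_sym; case: ifP => // H.
  by rewrite C1 //; apply: ep_of => //; rewrite pr_sym H.
- move=> a b eab; rewrite /setV.
  case: (eqVneq a u) => // au; case: (eqVneq b u) => [//|bu].
  rewrite compatSS; apply: C2; apply: ep_of => //.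
  by apply/negP => /pr_u; rewrite (negbTE au) (negbTE bu).
- move=> a b c eab eac bc; rewrite !ceIE.
  case: ifP => // H1; case: ifP => H2; first by [].
  by rewrite compatSS; apply: C3 => //; apply: ep_of => //; rewrite ?H1 ?H2.
- move=> a b eab; rewrite ceIE; case: ifP => // H; rewrite /setV.
  case: (eqVneq a u) => // au.
  by rewrite compatSS; apply: C4; apply: ep_of => //; rewrite H.
Qed.

Definition V6 := [set ce0 v y | y in [set y | e v y && (y != u)]].

Lemma V6_in y : e v y -> y != u -> ce0 v y \in V6.
Proof. by move=> ey yu; apply/imsetP; exists y; rewrite // inE ey yu. Qed.

Lemma V6_card : #|V6| <= 6.
Proof.
apply: leq_trans (leq_imset_card _ _) _.
have -> : [set y | e v y && (y != u)] = [set y | e v y] :\ u.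
  by apply/setP => y; rewrite !inE andbC.
have := cardsD1 u [set y | e v y]; rewrite inE evu.
have -> : #|[set y | e v y]| = 7 by rewrite -dv; apply: eq_card => y; rewrite inE.
by rewrite add1n => -[] <-.
Qed.

Lemma exfree8 k : exists c, [/\ c != cv0 v, c \notin V6 & c != k].
Proof.
have : #|cv0 v |: (k |: V6)| <= 8.
  apply: leq_trans (cardsU_le _ _) _; rewrite cards1.
  apply: leq_trans (leq_add (leqnn 1) (cardsU_le _ _)) _; rewrite cards1.
  by rewrite -[8]/(1 + (1 + 6)) !leq_add // V6_card.
case/ex_notin => c; rewrite !inE !negb_or => /and3P[H1 H2 H3].
by exists c; split.
Qed.

Lemma fin ce : PV e cvI ce -> (forall a b, e a b -> ce a b != None) ->
  total9_colorable e.
Proof.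
move=> P Fe.
have du4 : deg e u <= 4 by rewrite du.
have dw4 : deg e w <= 4 by rewrite dw.
have [cu [Hu1 Hu2]] := ex_vcol (s := u) P du4.
have P1 := PV_setV sg P Hu1 Hu2.
have [cw [Hw1 Hw2]] := ex_vcol (s := w) P1 dw4.
have P2 := PV_setV sg P1 Hw1 Hw2.
apply: (PV_total P2) => // a.
rewrite /setV; case: ifP => // aw; case: ifP => // au.
by rewrite cvI_o //; apply/negbT.
Qed.

Lemma notV a a' : a \notin V6 -> a' \in V6 -> a != a'.
Proof. by move=> H1 H2; apply: contraNneq H1 => ->. Qed.

Lemma ceI_vu : ceI v u = None.
Proof. exact: setE_st. Qed.
Lemma ceI_uv : ceI u v = None.
Proof. exact: setE_ts. Qed.

Lemma caseA : x = w -> total9_colorable e.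
Proof.
move=> Exw.
have euw : e u w by rewrite -Exw.
have zw : z != w by rewrite -Exw.
have [c [c1 c2 c3]] := exfree8 (ce0 u z).
pose ce1 := setE u w None ceI.
have P1 : PV e cvI ce1 by apply: PV_setE_None; exact: PV_I.
pose ce2 := setE v u (Some c) ce1.
have P2 : PV e cvI ce2.
  apply: (PV_setE sg P1 evu).
  - by rewrite cvI_o // compatSS.
  - by rewrite cvI_u.
  - move=> y ey yu; rewrite /ce1 setE_a // ceI_v // compatSS.
    by rewrite eq_sym; apply: notV => //; exact: V6_in.
  - move=> y ey yv; rewrite /ce1.
    case/or3P: (Nu ey) => /eqP Ey; first by rewrite Ey eqxx in yv.
      by rewrite Ey Exw setE_st.
    by rewrite Ey setE_b // ceI_u // compatSS eq_sym.
have dd : deg e u + deg e w <= 6 by rewrite du dw.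
have [c' [d1 d2 d3 d4]] := ex_ecol cvI ce2 dd.
pose ce3 := setE u w (Some c') ce2.
have P3 : PV e cvI ce3.
  by apply: (PV_setE sg P2 euw) => // y ey _; [exact: d3|exact: d4].
apply: (fin P3) => a b eab.
rewrite /ce3 /setE; case: ifP => // H1; rewrite /ce2 /setE; case: ifP => // H2.
by rewrite /ce1 /setE H1 ceIE /pr H2.
Qed.

Section CaseB.
Hypothesis xwn : x != w.
Let nuw : ~~ e u w.
Proof. by apply/negP => /xw E; move: xwn; rewrite E eqxx. Qed.
Let zw : z != w.
Proof. by apply: contraNneq nuw => <-. Qed.
Let xz : x != z. Proof. by rewrite eq_sym. Qed.
Let wx : w != x. Proof. by rewrite eq_sym. Qed.

Lemma bc_neq : ce0 u x != ce0 u z.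
Proof. by apply: C3 => //; apply: epu. Qed.

Lemma direct c1 : [/\ c1 != cv0 v, c1 \notin V6, c1 != ce0 u x & c1 != ce0 u z] ->
  total9_colorable e.
Proof.
case=> h1 h2 h3 h4.
pose ce2 := setE v u (Some c1) ceI.
have P2 : PV e cvI ce2.
  apply: (PV_setE sg PV_I evu).
  - by rewrite cvI_o // compatSS.
  - by rewrite cvI_u.
  - move=> y ey yu; rewrite ceI_v // compatSS.
    by rewrite eq_sym; apply: notV => //; exact: V6_in.
  - move=> y ey yv; rewrite ceI_u // compatSS.
    case/or3P: (Nu ey) => /eqP Ey; first by rewrite Ey eqxx in yv.
      by rewrite Ey eq_sym.
    by rewrite Ey eq_sym.
apply: (fin P2) => a b eab.
rewrite /ce2 /setE; case: ifP => // H1.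
by rewrite ceIE /pr H1.
Qed.

Lemma sub1 be : [/\ be != ce0 v w, be != cv0 v,
   (forall y, e v y -> y != w -> y != u -> ce0 v y != be) &
   (forall y, e w y -> y != v -> ce0 w y != be)] ->
   ce0 u x \notin V6 -> ce0 u z \notin V6 ->
  total9_colorable e.
Proof.
case=> h1 h2 h3 h4 hb hc.
have alV : ce0 v w \in V6 by apply: V6_in.
pose ce2 := setE v w (Some be) ceI.
have P2 : PV e cvI ce2.
  apply: (PV_setE sg PV_I evw).
  - by rewrite cvI_o // compatSS.
  - by rewrite cvI_w.
  - move=> y ey yw; case: (eqVneq y u) => [->|yu]; first by rewrite ceI_vu.
    by rewrite ceI_v // compatSS h3.
  - by move=> y ey yv; rewrite ceI_o // compatSS h4.
pose ce3 := setE v u (Some (ce0 v w)) ce2.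
have P3 : PV e cvI ce3.
  apply: (PV_setE sg P2 evu).
  - by rewrite cvI_o // compatSS; apply: C4; apply: epv.
  - by rewrite cvI_u.
  - move=> y ey yu; case: (eqVneq y w) => [->|yw].
      by rewrite /ce2 setE_st compatSS.
    rewrite /ce2 setE_b //; last by rewrite eq_sym; exact: neq_e.
    by rewrite ceI_v // compatSS; apply: C3 => //; apply: epv.
  - move=> y ey yv; rewrite /ce2 setE_a // ceI_u // compatSS.
    case/or3P: (Nu ey) => /eqP Ey; first by rewrite Ey eqxx in yv.
      by rewrite Ey; apply: notV.
    by rewrite Ey; apply: notV.
apply: (fin P3) => a b eab.
rewrite /ce3 /setE; case: ifP => // H1; rewrite /ce2 /setE; case: ifP => // H2.
by rewrite ceIE /pr H1.
Qed.

Theorem caseB : total9_colorable e.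
Proof.
have exU : ce0 u x != cv0 v /\ ce0 u x \notin V6 \/ total9_colorable e.
  have [c1 [h1 h2 h3]] := exfree8 (ce0 u z).
  case: (eqVneq c1 (ce0 u x)) => [E|h4]; last by right; apply: (@direct c1).
  by left; rewrite -E.
case: exU => [[hb1 hb2]|//].
have exU : ce0 u z != cv0 v /\ ce0 u z \notin V6 \/ total9_colorable e.
  have [c1 [h1 h2 h3]] := exfree8 (ce0 u x).
  case: (eqVneq c1 (ce0 u z)) => [E|h4]; last by right; apply: (@direct c1).
  by left; rewrite -E.
case: exU => [[hc1 hc2]|//].
have alV : ce0 v w \in V6 by apply: V6_in.
have gaV : ce0 v x \in V6 by apply: V6_in.
have bc := bc_neq.
case: (pickP [pred y | e w y && (y != v) && (ce0 w y == ce0 u x)]) =>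
  [yb /andP[/andP[ewb ybv] /eqP Eb] | Hnb]; last first.
  apply: (@sub1 (ce0 u x)) => //; split.
  - by apply: notV.
  - by [].
  - by move=> y ey yw yu; rewrite eq_sym; apply: notV => //; apply: V6_in.
  - by move=> y ey yv; have := Hnb y; rewrite /= ey yv /= => /negbT.
case: (pickP [pred y | e w y && (y != v) && (ce0 w y == ce0 u z)]) =>
  [yc /andP[/andP[ewc ycv] /eqP Ec] | Hnc]; last first.
  apply: (@sub1 (ce0 u z)) => //; split.
  - by apply: notV.
  - by [].
  - by move=> y ey yw yu; rewrite eq_sym; apply: notV => //; apply: V6_in.
  - by move=> y ey yv; have := Hnc y; rewrite /= ey yv /= => /negbT.
have ewv : e w v by rewrite esym.
have vyb : v != yb by rewrite eq_sym.
have [c' [ewc' c'v c'b Nw]] := nbr3 dw ewv ewb vyb.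
have ycb : yc != yb by apply: contraNneq bc => E; rewrite -Eb -Ec E.
have Ec' : yc = c'.
  by case/or3P: (Nw _ ewc) => /eqP //; [move=> E; rewrite E eqxx in ycv | move=> E; rewrite E eqxx in ycb].
have Wcol : forall y, e w y -> y != v -> (ce0 w y == ce0 u x) || (ce0 w y == ce0 u z).
  move=> y ey yv; case/or3P: (Nw _ ey) => /eqP Ey; first by rewrite Ey eqxx in yv.
    by rewrite Ey Eb eqxx.
  by rewrite Ey -Ec' Ec eqxx orbT.
have epvx : ep v x by apply: epv.
have epxv : ep x v by apply: epo => //; rewrite esym.
have epxu : ep x u by apply: epo => //; rewrite esym.
have Ega : ce0 v x = ce0 x v by apply: C1.
have Eb' : ce0 u x = ce0 x u by apply: C1; apply: epu.
pose ce2 := setE v x None ceI.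
have P2 : PV e cvI ce2 by apply: PV_setE_None; exact: PV_I.
pose ce3 := setE u x (Some (ce0 v x)) ce2.
have P3 : PV e cvI ce3.
  apply: (PV_setE sg P2 eux).
  - by rewrite cvI_u.
  - by rewrite cvI_o // compatSS Ega; apply: C4.
  - move=> y ey yx; rewrite /ce2 setE_a //.
    case/or3P: (Nu ey) => /eqP Ey; first by rewrite Ey ceI_uv.
      by rewrite Ey eqxx in yx.
    rewrite Ey ceI_u // compatSS; exact: notV.
  - move=> y ey yu; case: (eqVneq y v) => [->|yv]; first by rewrite /ce2 setE_ts.
    have yx : y != x by rewrite eq_sym; exact: neq_e.
    rewrite /ce2 setE_b // ceI_o // compatSS Ega; apply: C3 => //.
    exact: epo.
pose ce4 := setE v x (Some (ce0 u x)) ce3.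
have P4 : PV e cvI ce4.
  apply: (PV_setE sg P3 evx).
  - by rewrite cvI_o // compatSS eq_sym.
  - by rewrite cvI_o // compatSS Eb'; apply: C4.
  - move=> y ey yx.
    have yv : y != v by rewrite eq_sym; exact: neq_e.
    rewrite /ce3 setE_a // /ce2 setE_b //.
    case: (eqVneq y u) => [->|yu]; first by rewrite ceI_vu.
    rewrite ceI_v // compatSS eq_sym; apply: notV => //; exact: V6_in.
  - move=> y ey yv; case: (eqVneq y u) => [->|yu].
      by rewrite /ce3 setE_ts compatSS eq_sym; apply: notV.
    have yx : y != x by rewrite eq_sym; exact: neq_e.
    rewrite /ce3 setE_b // /ce2 setE_b // ceI_o // compatSS Eb'; apply: C3 => //.
    exact: epo.
pose ce5 := setE v w (Some (ce0 v x)) ce4.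
have P5 : PV e cvI ce5.
  apply: (PV_setE sg P4 evw).
  - by rewrite cvI_o // compatSS; apply: C4.
  - by rewrite cvI_w.
  - move=> y ey yw; case: (eqVneq y x) => [->|yx].
      rewrite /ce4 setE_st compatSS; apply: notV => //.
    have yv : y != v by rewrite eq_sym; exact: neq_e.
    rewrite /ce4 setE_b // /ce3 setE_a // /ce2 setE_b //.
    case: (eqVneq y u) => [->|yu]; first by rewrite ceI_vu.
    by rewrite ceI_v // compatSS; apply: C3 => //; apply: epv.
  - move=> y ey yv; rewrite /ce4 setE_a // /ce3 setE_a // /ce2 setE_a // ceI_o //.
    rewrite compatSS; case/orP: (Wcol _ ey yv) => /eqP ->; exact: notV.
pose ce6 := setE v u (Some (ce0 v w)) ce5.
have P6 : PV e cvI ce6.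
  apply: (PV_setE sg P5 evu).
  - by rewrite cvI_o // compatSS; apply: C4; apply: epv.
  - by rewrite cvI_u.
  - move=> y ey yu; case: (eqVneq y w) => [->|yw].
      by rewrite /ce5 setE_st compatSS; apply: C3 => //; apply: epv.
    have yv : y != v by rewrite eq_sym; exact: neq_e.
    case: (eqVneq y x) => [->|yx].
      by rewrite /ce5 setE_b // /ce4 setE_st compatSS; apply: notV.
    rewrite /ce5 setE_b // /ce4 setE_b // /ce3 setE_a // /ce2 setE_b //.
    by rewrite ceI_v // compatSS; apply: C3 => //; apply: epv.
  - move=> y ey yv.
    case/or3P: (Nu ey) => /eqP Ey; first by rewrite Ey eqxx in yv.
      rewrite Ey /ce5 setE_a // /ce4 setE_a // /ce3 setE_st compatSS.
      by apply: C3 => //; apply: epv.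
    rewrite Ey /ce5 setE_a // /ce4 setE_a // /ce3 setE_b // /ce2 setE_a //.
    by rewrite ceI_u // compatSS; apply: notV.
apply: (fin P6) => a b eab.
rewrite /ce6 /setE; case: ifP => // H6; rewrite /ce5 /setE; case: ifP => // H5.
rewrite /ce4 /setE; case: ifP => // H4; rewrite /ce3 /setE; case: ifP => // H3.
by rewrite /ce2 /setE H4 ceIE /pr H6.
Qed.
End CaseB.

Theorem recolor : total9_colorable e.
Proof.
case: (eqVneq x w) => [E|xwn]; first exact: caseA.
exact: caseB.
Qed.
End Recolor.

Theorem lemma2p5 (T : finType) (e : rel T) (rot : T -> T -> T) :
  minimal_counterexample e ->
  planar_rotation e rot ->
  forall v u w : T,
    deg e v = 7 ->
    deg e u = 3 -> edge_on_3face e rot v u ->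
    deg e w = 3 -> edge_on_3face e rot v w ->
    w = u.
Proof.
move=> [[sg pl mx nf nc] Min] [rs Eul] v u w dv du Hu dw Hw.
case: (eqVneq w u) => // wu; exfalso; apply: nc.
have esym : symmetric e := sg.1.
have eirr : irreflexive e := sg.2.
case/andP: Hu => evu Hu3.
case/andP: Hw => evw _.
have euv : e u v by rewrite esym.
have [x [eux evx xw]] : exists x, [/\ e u x, e v x & (e u w -> x = w)].
  case: (boolP (e u w)) => euw; first by exists w.
  case/orP: Hu3 => H.
    have [x [e1 e2]] := tri_common sg rs evu H.
    by exists x; split => // /(negP euw).
  have [x [e1 e2]] := tri_common sg rs euv H.
  by exists x; split => // /(negP euw).
have xv : x != v by apply: contraTneq evx => ->; rewrite eirr.
have xu : x != u by apply: contraTneq eux => ->; rewrite eirr.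
have vx : v != x by rewrite eq_sym.
have [z [euz zv zx Nu]] := nbr3 du euv eux vx.
have npq : ~~ fconnect (face_succ e rot) (v, u) (u, v).
  case/orP: Hu3 => H; first exact: (tri_nconn sg rs evu eux xv H).
  rewrite fconnect_sym; last exact: fs_inj.
  exact: (tri_nconn sg rs euv evx xu H).
have := Min _ (edel e u v) (sg' sg u v).
case.
- exists (rotdel rot u v); split; first exact: (rs' sg rs evu eux evx).
  move: Eul.
  rewrite (nfaces_del sg rs evu eux evx npq) (nedges_del sg evu).
  rewrite (ncomp_del sg evu eux evx) (nisol_del sg evu eux evx).
  by rewrite -!addnA [1 + _]addnC !addnA addn1 => /eqP; rewrite addn1 eqSS => /eqP.
- by move=> y; apply: leq_trans (deg_del _ _ _ _) (mx.1 y).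
- by move/fan_del.
- by rewrite (nedges_del sg evu) ltn_add2l addn1.
move=> cv0 [ce0 [C1 C2 C3 C4]].
exact: (recolor sg evu evw wu du dw dv eux evx euz zv zx Nu C1 C2 C3 C4).
Qed.
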